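(* Let $T>0$ and let $(\psi,r)$ be a (differentiable) solution on $[0,T]$ of the adjoint least squares shadowing (LSS) system $$\frac{d\psi}{dt}+f_u^*\psi+J_u=r,\qquad \psi(0)=0,\ \psi(T)=0,\qquad \frac{dr}{dt}-f_u r=\frac{1}{\alpha^2}\big(\psi^Tf+J-\bar J\big)f .$$ Let $\psi^\infty$ be the adjoint shadowing direction and let $e(t)=\psi(t)-\psi^\infty(t)$. Then $e$ satisfies $$\mathcal{L}e:=-\frac{d^2e}{dt^2}-\frac{d}{dt}\big(f_u^*e\big)+f_u\frac{de}{dt}+f_uf_u^*e+\frac{1}{\alpha^2}ff^Te=0\quad\text{on }[0,T],\qquad e(0)=-\psi^\infty(0),\ e(T)=-\psi^\infty(T).$$
   Context: Let $X=\mathbb{R}^n$ with inner product $x^Ty$. Let $f:X\times\mathbb{R}\to X$ be $C^2$, fix $s\in\mathbb{R}$, and let $u(t)$, $t\ge0$, solve $\frac{du}{dt}=f(u,s)$. Write $f(t)=f(u(t),s)$, $f_u(t)=\partial f/\partial u$ at $(u(t),s)$, and $f_u^*=f_u^T$. Let $J:X\times\mathbb{R}\to\mathbb{R}$ be smooth, with $J(t)=J(u(t),s)$, $J_u(t)$ its $u$-gradient (column vector), and $\bar J=\lim_{T\to\infty}\frac1T\int_0^TJ\,dt$, assumed to exist. The constant $\alpha^2>0$ is fixed. The adjoint shadowing direction $\psi^\infty:[0,\infty)\to X$ is a bounded differentiable solution of $\frac{d\psi^\infty}{dt}+f_u^*\psi^\infty+J_u=0$ satisfying $\lim_{T\to\infty}\frac1T\int_0^T\psi^{\infty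 T}f\,dt=0$; it is assumed to exist. *)

(* Defs.v *)
From HB Require Import structures.
From mathcomp Require Import all_boot all_order all_algebra.
From mathcomp Require Import all_classical all_reals all_analysis.
Set Implicit Arguments. Unset Strict Implicit. Unset Printing Implicit Defensive.
Import Order.TTheory GRing.Theory Num.Theory.
Import numFieldNormedType.Exports.
Local Open Scope classical_set_scope.
Local Open Scope ring_scope.

Fixpoint Ck (R : realType) (V W : normedModType R) (k : nat) (F : V -> W)
  : Prop :=
  match k with
  | 0 => continuous F
  | k'.+1 => (forall p, differentiable F p) /\ (forall v : V, Ck k' ('D_v F))
  end.

Definition smooth (R : realType) (V W : normedModType R) (F : V -> W) : Prop :=
  forall k, Ck k F.

Definition dotv (R : realType) (n : nat) (x y : 'cV[R]_n) : R := (x^T *m y) 0 0.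

Definition jacobianM (R : realType) (n : nat) (F : 'cV[R]_n -> 'cV[R]_n)
  (x : 'cV[R]_n) : 'M[R]_n :=
  \matrix_(i, j) ('D_(delta_mx j 0) F x) i 0.

Definition gradientV (R : realType) (n : nat) (G : 'cV[R]_n -> R)
  (x : 'cV[R]_n) : 'cV[R]_n :=
  \col_i ('D_(delta_mx i 0) G x).

(* derivative of g : R -> V at t relative to the set I (one-sided at the
   endpoints of an interval, ordinary derivative at interior points) *)
Definition is_deriv_in (R : realType) (V : normedModType R) (I : set R)
  (g : R -> V) (t : R) (l : V) : Prop :=
  (fun h : R => h^-1 *: (g (h + t) - g t)) @ within (fun h => I (h + t)) 0^'
    --> l.

Definition deriv_on (R : realType) (V : normedModType R) (I : set R)
  (g : R -> V) (dg : R -> V) : Prop :=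
  forall t, I t -> is_deriv_in I g t (dg t).

Definition time_average_is (R : realType) (g : R -> R) (l : R) : Prop :=
  (fun T : R => T^-1 * \int[lebesgue_measure]_(t in `[0, T]) g t) @ +oo --> l.

(* Main.v *)
Require Import Defs.
From HB Require Import structures.
From mathcomp Require Import all_boot all_order all_algebra.
From mathcomp Require Import all_classical all_reals all_analysis.
From mathcomp Require Import ring lra.
Import Order.TTheory GRing.Theory Num.Theory.
Import numFieldNormedType.Exports.
Local Open Scope classical_set_scope.
Local Open Scope ring_scope.

Set Implicit Arguments.
Section Aux.
Context {R : realType}.
Local Notation Gf I t := (within (fun h : R => I (h + t)) (0:R)^').

Lemma G_neq0 (I : set R) t : \forall h \near Gf I t, h != 0.
Proof.
rewrite near_withinE; apply: filterS (nbhs_dnbhs_neq (0:R)) => h hn _; exact: hn.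
Qed.

Lemma G_to0 (I : set R) t : (fun h : R => h) @ Gf I t --> (0:R).
Proof.
apply: cvg_within_filter.
first [exact: (cvg_trans (cvg_fmap2 (nbhs_dnbhs (0:R))) cvg_id) | exact: cvg_within_filter cvg_id | idtac "fail"].
Qed.

Lemma deriv_cont {V : normedModType R} (I : set R) (g : R -> V) t l :
  is_deriv_in I g t l -> g (h + t) @[h --> Gf I t] --> g t.
Proof.
move=> H.
have X : h *: (h^-1 *: (g (h + t) - g t)) + g t @[h --> Gf I t] --> 0 *: l + g t.
  apply: cvgD; [apply: cvgZ => //; exact: G_to0 | exact: cvg_cst].
rewrite scale0r add0r in X; apply: cvg_trans X; apply: near_eq_cvg.
near=> h. rewrite scalerA mulfV ?scale1r ?subrK //. near: h; exact: G_neq0.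
Unshelve. all: by end_near. Qed.

Lemma cvg_entry {T} {F : set_system T} {FF : Filter F} m k
  (g : T -> 'M[R]_(m,k)) (l : 'M[R]_(m,k)) i j :
  g @ F --> l -> (fun x => g x i j) @ F --> l i j.
Proof.
move=> H; apply/cvgrPdist_le => e e0.
move/cvgrPdist_le : H => /(_ _ e0); apply: filterS => x.
apply: le_trans.
rewrite [leRHS]/Num.Def.normr/= mx_normrE.
apply: le_trans; last exact: (le_bigmax _ _ (i,j)).
by rewrite !mxE.
Qed.

Lemma cvg_entries {T} {F : set_system T} {FF : Filter F} m k
  (g : T -> 'M[R]_(m,k)) (l : 'M[R]_(m,k)) :
  (forall i j, (fun x => g x i j) @ F --> l i j) -> g @ F --> l.
Proof.
move=> H; apply/cvgrPdist_le => /= e e0.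
near=> x.
rewrite /Num.Def.normr/= mx_normrE (bigmax_le _ (ltW e0))//= => i _.
rewrite !mxE/=.
move: i; near: x; apply: filter_forall => /= i.
exact: ((cvgrPdist_le _ _).1 (H i.1 i.2)).
Unshelve. all: by end_near. Qed.

Lemma deriv_entry m k (I : set R) (g : R -> 'M[R]_(m,k)) t (l : 'M[R]_(m,k)) i j :
  is_deriv_in I g t l -> is_deriv_in I (fun x => g x i j) t (l i j).
Proof.
move=> H; have := cvg_entry i j H.
have -> : (fun x => (x^-1 *: (g (x + t) - g t)) i j) =
   (fun x => x^-1 *: (g (x + t) i j - g t i j)) by apply/funext => x; rewrite !mxE.
by move=> Hx; exact: Hx.
Qed.

Lemma deriv_entries m k (I : set R) (g : R -> 'M[R]_(m,k)) t (l : 'M[R]_(m,k)) :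
  (forall i j, is_deriv_in I (fun x => g x i j) t (l i j)) -> is_deriv_in I g t l.
Proof.
move=> H; apply: cvg_entries => i j.
have -> : (fun x => (x^-1 *: (g (x + t) - g t)) i j) =
   (fun x => x^-1 *: (g (x + t) i j - g t i j)) by apply/funext => x; rewrite !mxE.
exact: H.
Qed.

Lemma deriv_mul (I : set R) (a b : R -> R) t da db :
  is_deriv_in I a t da -> is_deriv_in I b t db ->
  is_deriv_in I (fun x => a x * b x) t (da * b t + a t * db).
Proof.
move=> Ha Hb; have Hb' := deriv_cont Hb.
rewrite /is_deriv_in.
have -> : (fun h => h^-1 *: (a (h + t) * b (h + t) - a t * b t)) =
  (fun h => (h^-1 *: (a (h+t) - a t)) * b (h + t) + a t * (h^-1 *: (b (h+t) - b t))).
  apply/funext => h /=. rewrite /GRing.scale /=. ring.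
apply: cvgD; [exact: cvgM | exact: cvgM (cvg_cst _) Hb].
Qed.

Lemma deriv_sum (I : set R) (A : Type) (r : seq A) (a : A -> R -> R) (da : A -> R) t :
  (forall k, is_deriv_in I (a k) t (da k)) ->
  is_deriv_in I (fun x => \sum_(k <- r) a k x) t (\sum_(k <- r) da k).
Proof.
move=> H; rewrite /is_deriv_in.
have -> : (fun h => h^-1 *: (\sum_(k <- r) a k (h + t) - \sum_(k <- r) a k t)) =
   fun h => \sum_(k <- r) h^-1 *: (a k (h+t) - a k t).
  by apply/funext => h; rewrite -sumrB scaler_sumr.
apply: (@cvg_big _ _ +%R 0 xpredT add_continuous) => // k _; exact: H.
Qed.


Lemma deriv_add {V : normedModType R} (I : set R) (a b : R -> V) t da db :
  is_deriv_in I a t da -> is_deriv_in I b t db ->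
  is_deriv_in I (fun x => a x + b x) t (da + db).
Proof.
move=> Ha Hb; rewrite /is_deriv_in.
have -> : (fun h => h^-1 *: (a (h + t) + b (h + t) - (a t + b t))) =
  (fun h => h^-1 *: (a (h+t) - a t) + h^-1 *: (b (h+t) - b t)).
  by apply/funext => h; rewrite -scalerDr opprD addrACA.
exact: cvgD.
Qed.

Lemma deriv_opp {V : normedModType R} (I : set R) (a : R -> V) t da :
  is_deriv_in I a t da -> is_deriv_in I (fun x => - a x) t (- da).
Proof.
move=> Ha; rewrite /is_deriv_in.
have -> : (fun h => h^-1 *: (- a (h + t) - - a t)) =
  (fun h => - (h^-1 *: (a (h+t) - a t))).
  by apply/funext => h; rewrite -scalerN opprD.
exact: cvgN.
Qed.

Lemma deriv_sub {V : normedModType R} (I : set R) (a b : R -> V) t da db :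
  is_deriv_in I a t da -> is_deriv_in I b t db ->
  is_deriv_in I (fun x => a x - b x) t (da - db).
Proof. by move=> Ha Hb; apply: deriv_add => //; exact: deriv_opp. Qed.

Lemma deriv_mulmx (I : set R) m p q (A : R -> 'M[R]_(m,p)) (B : R -> 'M[R]_(p,q)) t
  (dA : 'M[R]_(m,p)) (dB : 'M[R]_(p,q)) :
  is_deriv_in I A t dA -> is_deriv_in I B t dB ->
  is_deriv_in I (fun x => A x *m B x) t (dA *m B t + A t *m dB).
Proof.
move=> HA HB; apply: deriv_entries => i j.
have -> : (fun x => (A x *m B x) i j) = fun x => \sum_k A x i k * B x k j
  by apply/funext => x; rewrite mxE.
rewrite !mxE -big_split /=.
apply: deriv_sum => k; apply: deriv_mul; exact: deriv_entry.
Qed.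

Lemma deriv_tr (I : set R) m p (A : R -> 'M[R]_(m,p)) t (dA : 'M[R]_(m,p)) :
  is_deriv_in I A t dA -> is_deriv_in I (fun x => (A x)^T) t dA^T.
Proof.
move=> HA; apply: deriv_entries => i j.
have -> : (fun x => (A x)^T i j) = fun x => A x j i
  by apply/funext => x; rewrite mxE.
rewrite mxE; exact: deriv_entry.
Qed.

Lemma deriv_subset {V : normedModType R} (I I' : set R) (g : R -> V) t l :
  I `<=` I' -> is_deriv_in I' g t l -> is_deriv_in I g t l.
Proof.
move=> II' H; apply: cvg_trans H; apply: cvg_fmap2.
apply: within_subset => // h; exact: II'.
Qed.

Lemma deriv_eq_on {V : normedModType R} (I : set R) (g1 g2 : R -> V) t l :
  I t -> (forall x, I x -> g1 x = g2 x) ->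
  is_deriv_in I g1 t l -> is_deriv_in I g2 t l.
Proof.
move=> It E H; apply: cvg_trans H; apply: near_eq_cvg.
rewrite near_withinE; apply: filterE => h Ih /=.
by rewrite !E.
Qed.

Lemma deriv_chain {U W : normedModType R} (I : set R) (c : R -> U) (F : U -> W) t v :
  is_deriv_in I c t v -> differentiable F (c t) ->
  is_deriv_in I (F \o c) t ('d F (c t) v).
Proof.
move=> Hc dF.
have ho := (eqaddoP _ _ _ _).1 (diff_locally dF).
set q := fun h : R => h^-1 *: (c (h + t) - c t).
have Hq : q @ Gf I t --> v := Hc.
have Hw : (fun h => h *: q h) @ Gf I t --> (0 : U).
  rewrite -(scale0r v); apply: cvgZ => //; exact: G_to0.
have Hd : (fun h => 'd F (c t) (q h)) @ Gf I t --> 'd F (c t) v.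
  apply: (cvg_comp _ _ Hq); exact: diff_continuous.
apply/cvgrPdist_le => e e0.
have B0 : 0 < `|v| + 1 by rewrite ltr_wpDl.
have eps0 : 0 < e / 2 / (`|v| + 1) by rewrite !divr_gt0.
have hw := Hw _ (ho _ eps0).
have e20 : 0 < e / 2 by rewrite divr_gt0.
near=> h.
have hn0 : h != 0 by near: h; exact: G_neq0.
have hqB : `|q h| <= `|v| + 1.
  have : `|v - q h| <= 1.
    near: h; exact: ((cvgrPdist_le _ _).1 Hq _ ltr01).
  move=> H1; rewrite -[q h](subKr v) (le_trans (ler_normD _ _))//.
  by rewrite normrN lerD2l.
have hk : `|(F \o shift (c t) - (cst (F (c t)) + 'd F (c t))) (h *: q h)|
     <= e / 2 / (`|v| + 1) * `|h *: q h| by near: h; exact: hw.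
have hd : `|'d F (c t) v - 'd F (c t) (q h)| <= e / 2.
  near: h; exact: ((cvgrPdist_le _ _).1 Hd _ e20).
have hq : h *: q h = c (h + t) - c t by rewrite /q scalerA mulfV ?scale1r.
have kE : (F \o shift (c t) - (cst (F (c t)) + 'd F (c t))) (h *: q h) =
   F (c (h + t) - c t + c t) - (F (c t) + 'd F (c t) (h *: q h)) by rewrite hq.
move: hk; rewrite kE subrK linearZ /=.
set K := F (c (h + t)) - _.
have E : h^-1 *: (F (c (h + t)) - F (c t)) = 'd F (c t) (q h) + h^-1 *: K.
  rewrite /K [in RHS]opprD [in RHS]addrA [in RHS]scalerBr [in RHS]scalerA mulVf // scale1r.
  by rewrite [RHS]addrC subrK.
have hpos : 0 < `|h| by rewrite normr_gt0.
move=> hk.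
have hK2 : `|K| <= `|h| * (e / 2).
  apply: (le_trans hk); rewrite normrZ.
  have -> : `|h| * (e / 2) = e / 2 / (`|v| + 1) * (`|h| * (`|v| + 1)).
    by field; rewrite gt_eqF.
  by rewrite ler_wpM2l ?ler_wpM2l // ltW.
rewrite E opprD addrA (le_trans (ler_normD _ _))//.
rewrite (splitr e) lerD // normrN normrZ normrV ?unitfE //.
by rewrite -(ler_pM2l hpos) mulrA mulfV ?gt_eqF // mul1r.
Unshelve. all: by end_near. Qed.


Lemma deriv_pair {U : normedModType R} (I : set R) (u : R -> U) (s : R) t v :
  is_deriv_in I u t v -> is_deriv_in I (fun x => (u x, s)) t (v, 0).
Proof.
move=> H; rewrite /is_deriv_in.
have -> : (fun h => h^-1 *: ((u (h+t), s) - (u t, s))) =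
  (fun h => (h^-1 *: (u (h+t) - u t), h^-1 *: (s - s))) by [].
apply: (@cvg_pair _ _ _ _ (nbhs v) (nbhs (0:R)) _ _ _); first exact: H.
have -> : (fun h : R => h^-1 *: (s - s)) = fun _ => 0.
  by apply/funext => h; rewrite subrr scaler0.
exact: cvg_cst.
Qed.

Lemma Dpair {U W : normedModType R} (F : U * R -> W) (v x : U) (s : R) :
  'D_v (fun y => F (y, s)) x = 'D_((v, 0)) F (x, s).
Proof.
rewrite /derive; first [congr (lim (fmap _ _)) | f_equal; f_equal]; apply/funext => h /=.
congr (_ *: (F _ - _)).
have -> : h *: ((v, 0) : U * R) + (x, s) = (h *: v + x, h *: 0 + s) by [].
by rewrite scaler0 add0r.
Qed.

Lemma deriv_chain_pair {U W : normedModType R} (I : set R) (u : R -> U)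
   (F : U * R -> W) s t v :
  is_deriv_in I u t v -> differentiable F (u t, s) ->
  is_deriv_in I (fun x => F (u x, s)) t ('d F (u t, s) (v, 0)).
Proof.
move=> Hu dF.
exact: (deriv_chain (c := fun x => (u x, s)) (deriv_pair s Hu) dF).
Qed.

Lemma dlin {W : normedModType R} n (F : 'cV[R]_n * R -> W) x s (w : 'cV[R]_n) :
  differentiable F (x, s) ->
  'd F (x, s) (w, 0) = \sum_j w j 0 *: 'D_((delta_mx j 0, 0)) F (x, s).
Proof.
move=> dF.
under eq_bigr do rewrite deriveE //.
set L := fun y : 'cV[R]_n => 'd F (x, s) (y, 0).
have LZ : forall a y, L (a *: y) = a *: L y.
  move=> a y; rewrite /L -linearZ /=; congr ('d F (x, s) _).
  have -> : a *: ((y, 0) : 'cV[R]_n * R) = (a *: y, a *: 0) by [].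
  by rewrite scaler0.
have L0 : L 0 = 0 by rewrite /L; exact: linear0.
have LD : forall a b, L (a + b) = L a + L b.
  move=> a b; rewrite /L -linearD /=; congr ('d F (x, s) _).
  have -> : ((a, 0) : 'cV[R]_n * R) + (b, 0) = (a + b, 0 + 0) by [].
  by rewrite addr0.
have -> : 'd F (x, s) (w, 0) = L w by [].
have wE : w = \sum_(j < n) w j 0 *: delta_mx j 0.
  rewrite {1}[w]matrix_sum_delta; apply: eq_bigr => j _.
  by rewrite big_ord1.
transitivity (L (\sum_(j < n) w j 0 *: delta_mx j 0)); first by rewrite -wE.
rewrite (big_morph L LD L0).
by apply: eq_bigr => j _; rewrite LZ.
Qed.

Lemma jac_mul n (f : 'cV[R]_n * R -> 'cV[R]_n) x s (w : 'cV[R]_n) :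
  differentiable f (x, s) ->
  jacobianM (fun y => f (y, s)) x *m w = 'd f (x, s) (w, 0).
Proof.
move=> df; rewrite dlin //; apply/matrixP => i k; rewrite (ord1 k) !mxE summxE.
by apply: eq_bigr => j _; rewrite !mxE Dpair mulrC.
Qed.

Lemma grad_dot n (J : 'cV[R]_n * R -> R) x s (w : 'cV[R]_n) :
  differentiable J (x, s) ->
  dotv (gradientV (fun y => J (y, s)) x) w = 'd J (x, s) (w, 0).
Proof.
move=> dJ; rewrite dlin // /dotv !mxE.
by apply: eq_bigr => j _; rewrite !mxE Dpair mulrC.
Qed.

Lemma G_eventually (P : set R) (F : set_system R) {FF : Filter F} :
  (\forall h \near F, P h) -> F `=>` within P F.
Proof.
move=> HP A WA; apply: filterS2 HP WA => x Px H; exact: H Px.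
Qed.

Lemma deriv_interior (g : R -> R) t l :
  0 < t -> is_deriv_in [set x | 0 <= x] g t l -> is_derive t 1 g l.
Proof.
move=> t0 H.
have Hc : (fun h : R => h^-1 *: (g (h *: 1 + t) - g t)) @ 0^' --> l.
  have -> : (fun h : R => h^-1 *: (g (h *: 1 + t) - g t)) =
            (fun h => h^-1 *: (g (h + t) - g t)).
    by apply/funext => h; rewrite /GRing.scale /= mulr1.
  apply: cvg_trans H; apply: cvg_fmap2 => A WA.
  have Ht := dnbhs0_lt t0.
  near=> h.
  have : [set x | 0 <= x] (h + t) -> A h by near: h; exact: WA.
  apply => /=.
  have : `|h| < t by near: h; exact: Ht.
  rewrite ltr_norml => /andP [h1 _].
  lra.
apply: DeriveDef; first by apply/cvg_ex; exists l.
by rewrite /derive; exact: cvg_lim.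
Unshelve. all: by end_near. Qed.

Lemma cont_from_deriv (g : R -> R) x : 0 < x ->
  (forall y, 0 <= y -> exists l, is_deriv_in [set z | 0 <= z] g y l) ->
  {within `[0, x], continuous g}.
Proof.
move=> x0 H.
have contin : forall y : R, 0 < y -> g z @[z --> y] --> g y.
  move=> y y0; have [l Hl] := H y (ltW y0).
  have [dg _] := deriv_interior y0 Hl.
  apply: differentiable_continuous; exact/derivable1_diffP.
apply/continuous_within_itvP => //; split.
- by move=> y; rewrite in_itv /= => /andP [y0 _]; exact: contin.
- have [l Hl] := H 0 (lexx 0).
  have Hg := deriv_cont Hl.
  have E : (fun h => g (h + 0)) = g by apply/funext => h; rewrite addr0.
  rewrite E in Hg; apply: cvg_trans Hg; apply: cvg_fmap2.
  move=> A WA.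
  have WA' : \forall h \near (0:R), h != 0 -> 0 <= h + 0 -> A h := WA.
  suff : \forall h \near (0:R), 0 < h -> A h by [].
  near=> h => h0.
  have : h != 0 -> 0 <= h + 0 -> A h by near: h; exact: WA'.
  by apply; [rewrite gt_eqF | rewrite addr0 ltW].
- exact: cvg_within_filter (contin _ x0).
Unshelve. all: by end_near. Qed.

Lemma cst_from_deriv (g : R -> R) :
  (forall y, 0 <= y -> is_deriv_in [set z | 0 <= z] g y 0) ->
  forall x, 0 <= x -> g x = g 0.
Proof.
move=> H x; rewrite le_eqVlt => /predU1P [<-|x0] //.
have := @MVT R g (fun _ => 0) 0 x x0.
case.
- move=> y; rewrite in_itv /= => /andP [y0 _]; exact: deriv_interior y0 (H y (ltW y0)).
- by apply: cont_from_deriv => // y y0; exists 0; exact: H.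
- by move=> c _; rewrite mul0r => /eqP; rewrite subr_eq0 => /eqP.
Qed.


Lemma dotvC n (x y : 'cV[R]_n) : dotv x y = dotv y x.
Proof. by rewrite /dotv !mxE; apply: eq_bigr => k _; rewrite !mxE mulrC. Qed.

Lemma dotvBl n (x y z : 'cV[R]_n) : dotv (x - y) z = dotv x z - dotv y z.
Proof.
by rewrite /dotv !mxE -sumrB; apply: eq_bigr => k _; rewrite !mxE mulrBl.
Qed.

Lemma mul_col11 n (x : 'cV[R]_n) (M : 'M[R]_1) : x *m M = M 0 0 *: x.
Proof.
apply/matrixP => i k; rewrite (ord1 k) !mxE big_ord1 mulrC.
by [].
Qed.

End Aux.
Unset Implicit Arguments.

Theorem mainTheorem2 (R : realType) (n : nat)
  (f : 'cV[R]_n * R -> 'cV[R]_n) (J : 'cV[R]_n * R -> R) (s alpha : R)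
  (u : R -> 'cV[R]_n) (Jbar : R) (psiinf : R -> 'cV[R]_n)
  (T : R) (psi r dpsi dr : R -> 'cV[R]_n) :
  let fv := fun t => f (u t, s) in
  let fu := fun t => jacobianM (fun x => f (x, s)) (u t) in
  let Ju := fun t => gradientV (fun x => J (x, s)) (u t) in
  let Jv := fun t => J (u t, s) in
  let I := [set t : R | 0 <= t <= T] in
  (* standing assumptions *)
  Ck 2 f -> smooth J -> 0 < alpha ^+ 2 ->
  deriv_on [set t : R | 0 <= t] u fv ->
  time_average_is Jv Jbar ->
  (* psiinf is the adjoint shadowing direction *)
  (exists dpinf, deriv_on [set t : R | 0 <= t] psiinf dpinf /\
     forall t, 0 <= t -> dpinf t + (fu t)^T *m psiinf t + Ju t = 0) ->
  (exists M : R, forall t, 0 <= t -> `|psiinf t| <= M) ->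
  time_average_is (fun t => dotv (psiinf t) (fv t)) 0 ->
  (* (psi, r) solves the adjoint LSS system on [0, T] *)
  0 < T ->
  deriv_on I psi dpsi -> deriv_on I r dr ->
  (forall t, I t -> dpsi t + (fu t)^T *m psi t + Ju t = r t) ->
  psi 0 = 0 -> psi T = 0 ->
  (forall t, I t -> dr t - fu t *m r t =
     ((alpha ^+ 2)^-1 * (dotv (psi t) (fv t) + Jv t - Jbar)) *: fv t) ->
  let e := fun t => psi t - psiinf t in
  exists de d2e dfue : R -> 'cV[R]_n,
    deriv_on I e de /\ deriv_on I de d2e /\
    deriv_on I (fun t => (fu t)^T *m e t) dfue /\
    (forall t, I t ->
       - d2e t - dfue t + fu t *m de t + fu t *m ((fu t)^T *m e t)
       + (alpha ^+ 2)^-1 *: (fv t *m ((fv t)^T *m e t)) = 0) /\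
    e 0 = - psiinf 0 /\ e T = - psiinf T.
Proof.
move=> fv fu Ju Jv I Hf HJ Ha Hu Hav [dpinf [Hpinf Epinf]] _ Havpf T0 Hpsi Hr
  Epsi psi0 psiT Er e.
set P0 := [set t : R | 0 <= t].
have df : forall p, differentiable f p := Hf.1.
have dDf : forall v p, differentiable ('D_v f) p := fun v => (Hf.2 v).1.
have dJ : forall p, differentiable J p := (HJ 1%N).1.
have IP0 : forall t, I t -> P0 t by move=> t /andP [].
have Ifv : forall t, P0 t -> is_deriv_in P0 fv t (fu t *m fv t).
  move=> t Pt; rewrite /fu jac_mul //.
  by have := deriv_chain_pair (Hu t Pt) (df (u t, s)).
have IJv : forall t, P0 t -> is_deriv_in P0 Jv t (dotv (Ju t) (fv t)).
  move=> t Pt; rewrite /Ju grad_dot //.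
  by have := deriv_chain_pair (Hu t Pt) (dJ (u t, s)).
set g := fun t => dotv (psiinf t) (fv t) + Jv t.
have Hg : forall t, 0 <= t -> is_deriv_in [set z | 0 <= z] g t 0.
  move=> t Pt.
  have H1 := deriv_mulmx (deriv_tr (Hpinf t Pt)) (Ifv t Pt).
  have H2 := deriv_entry 0 0 H1.
  have H3 := deriv_add H2 (IJv t Pt).
  suff E : ((dpinf t)^T *m fv t + (psiinf t)^T *m (fu t *m fv t)) 0 0
              + dotv (Ju t) (fv t) = 0 by move: H3; rewrite E.
  have E0 : (dpinf t + (fu t)^T *m psiinf t + Ju t)^T *m fv t =
     (dpinf t)^T *m fv t + (psiinf t)^T *m (fu t *m fv t) + (Ju t)^T *m fv t.
    by rewrite !linearD /= !mulmxDl trmx_mul trmxK mulmxA.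
  have E1 : ((dpinf t)^T *m fv t + (psiinf t)^T *m (fu t *m fv t)
             + (Ju t)^T *m fv t) 0 0 = 0.
    by rewrite -E0 Epinf // trmx0 mul0mx mxE.
  by rewrite -E1 [RHS]mxE.
have Gc := cst_from_deriv Hg.
have gJ : g 0 = Jbar.
  set c := g 0.
  have Iint : forall T', 0 < T' ->
      (lebesgue_measure).-integrable `[0, T'] (EFin \o Jv).
    move=> T' T'0; apply: continuous_compact_integrable; first exact: segment_compact.
    apply: cont_from_deriv => // y y0; exists (dotv (Ju y) (fv y)); exact: IJv.
  have Icst : forall T', 0 < T' ->
      (lebesgue_measure).-integrable `[0, T'] (EFin \o (fun _ : R => c)).
    move=> T' T'0; apply: continuous_compact_integrable; first exact: segment_compact.
    by move=> y; apply: cvg_cst.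
  have E : forall T', 0 < T' ->
     T'^-1 * \int[lebesgue_measure]_(t in `[0, T']) dotv (psiinf t) (fv t)
     = c - T'^-1 * \int[lebesgue_measure]_(t in `[0, T']) Jv t.
    move=> T' T'0.
    rewrite (@eq_Rintegral _ _ _ lebesgue_measure _ (fun t => c - Jv t)); last first.
      move=> t; rewrite inE /= in_itv /= => /andP [t0 _].
      by rewrite /c -(Gc t t0) /g addrK.
    rewrite RintegralB //; [|exact: Icst|exact: Iint].
    rewrite Rintegral_cst //.
    have -> : fine (lebesgue_measure `[0, T']%classic) = T'.
      first [rewrite lebesgue_measure_itv /= lte_fin T'0 /= subr0 // |
             rewrite (@lebesgue_measure_itv R `[0, T']) /= lte_fin T'0 /= subr0 // |
             idtac "FAIL"; match goal with |- ?g => idtac g end].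
    by field; rewrite gt_eqF.
  have L1 : (fun T' => c - T'^-1 * \int[lebesgue_measure]_(t in `[0, T']) Jv t)
              @ +oo --> 0.
    apply: cvg_trans Havpf; apply: near_eq_cvg; near=> T'.
    by rewrite E //; near: T'; apply: nbhs_pinfty_gt; rewrite num_real.
  have L2 : (fun T' => c - T'^-1 * \int[lebesgue_measure]_(t in `[0, T']) Jv t)
              @ +oo --> c - Jbar.
    exact: cvgB (cvg_cst _) Hav.
  have H0 : c - Jbar = 0 := cvg_unique _ L2 L1.
  by apply/eqP; rewrite -subr_eq0 H0.
have Key : forall t, 0 <= t -> dotv (psiinf t) (fv t) + Jv t = Jbar.
  by move=> t t0; rewrite -gJ -(Gc t t0).
set de := fun t => dpsi t - dpinf t.
have Hde : deriv_on I e de.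
  move=> t It; apply: deriv_sub; first exact: Hpsi.
  exact: (deriv_subset IP0 (Hpinf t (IP0 t It))).
have Ee : forall t, I t -> de t = r t - (fu t)^T *m e t.
  move=> t It; rewrite /de /e -(Epsi t It).
  have E0 := Epinf t (IP0 t It).
  have D : dpinf t = - Ju t - (fu t)^T *m psiinf t.
    apply/matrixP => i j; move/matrixP: E0 => /(_ i j); rewrite !mxE => E0.
    lra.
  by rewrite D mulmxBr; apply/matrixP => i j; rewrite !mxE; ring.
set dFu := fun t => \matrix_(i, j)
   ('d ('D_((delta_mx j 0, 0) : 'cV[R]_n * R) f) (u t, s) (fv t, 0)) i 0.
have HFu : forall t, P0 t -> is_deriv_in P0 fu t (dFu t).
  move=> t Pt; apply: deriv_entries => i j.
  have -> : (fun x => fu x i j) =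
      (fun x => ('D_((delta_mx j 0, 0) : 'cV[R]_n * R) f (u x, s)) i 0).
    by apply/funext => x; rewrite /fu /jacobianM mxE Dpair.
  rewrite mxE; apply: (deriv_entry i 0).
  by have := deriv_chain_pair (Hu t Pt) (dDf ((delta_mx j 0, 0)) (u t, s)).
set dfue := fun t => (dFu t)^T *m e t + (fu t)^T *m de t.
have Hfue : deriv_on I (fun t => (fu t)^T *m e t) dfue.
  move=> t It.
  have := deriv_mulmx (deriv_tr (deriv_subset IP0 (HFu t (IP0 t It)))) (Hde t It).
  by [].
set d2e := fun t => dr t - dfue t.
have Hd2e : deriv_on I de d2e.
  move=> t It.
  apply: (@deriv_eq_on R _ I (fun x => r x - (fu x)^T *m e x) de t (d2e t) It).
  - by move=> x Ix; rewrite Ee.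
  - exact: deriv_sub (Hr t It) (Hfue t It).
exists de, d2e, dfue; split => //; split => //; split => //; split.
- move=> t It.
  have E1 : fu t *m de t + fu t *m ((fu t)^T *m e t) = fu t *m r t.
    by rewrite -mulmxDr Ee // subrK.
  have E2 : dr t = fu t *m r t +
      ((alpha ^+ 2)^-1 * (dotv (psi t) (fv t) + Jv t - Jbar)) *: fv t.
    by rewrite -(Er t It) addrC subrK.
  have E3 : dotv (psi t) (fv t) + Jv t - Jbar = dotv (e t) (fv t).
    rewrite -(Key t (IP0 t It)) /e dotvBl; lra.
  have E4 : fv t *m ((fv t)^T *m e t) = dotv (e t) (fv t) *: fv t.
    by rewrite mul_col11 dotvC.
  rewrite /d2e (Ee t It) mulmxBr E4 E2 E3.
  by apply/matrixP => i j; rewrite !mxE; ring.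
- by split; rewrite /e ?psi0 ?psiT sub0r.
Unshelve. all: by end_near.
Qed.
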